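(* A function $\phi:\mathbb{F}_2^n\to\mathbb{C}$ satisfies $\|\phi\|_2=\|\phi\|_{U^3}=1$ (i.e. $\phi$ is a stabilizer state) if and only if there exists a Lagrangian subspace $L\le\mathbb{F}_2^{2n}$ such that for all $a,b\in\mathbb{F}_2^n$, $$\big|\widehat{\Delta_a\phi}(b)\big|=\begin{cases}1 & \text{if }(a,b)\in L,\\ 0&\text{if }(a,b)\notin L.\end{cases}$$
   Context: For $g:\mathbb{F}_2^n\to\mathbb{C}$: $\|g\|_2=(\mathbb{E}_{x\in\mathbb{F}_2^n}|g(x)|^2)^{1/2}$; $\Delta_a g(x)=g(x+a)\overline{g(x)}$; $\hat g(b)=\mathbb{E}_{x\in\mathbb{F}_2^n}g(x)(-1)^{b\cdot x}$; $\|g\|_{U^3}=\big(\mathbb{E}_{x,a,b,c}\Delta_a\Delta_b\Delta_c g(x)\big)^{1/8}$. The standard symplectic form on $\mathbb{F}_2^{2n}=\mathbb{F}_2^n\times\mathbb{F}_2^n$ is $[(a,b),(c,d)]=a\cdot d-b\cdot c$. A subspace $U$ is isotropic if $[u,v]=0$ for all $u,v\in U$; a Lagrangian subspace is a maximal isotropic subspace (equivalently an isotropic subspace of dimension $n$). *)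

(* Defs.v *)
From HB Require Import structures.
From mathcomp Require Import all_boot all_order all_algebra.
From mathcomp Require Import complex.
From mathcomp Require Import reals.
Set Implicit Arguments. Unset Strict Implicit. Unset Printing Implicit Defensive.
Import Order.TTheory GRing.Theory Num.Theory.
Local Open Scope ring_scope.

Notation F2n n := 'rV['F_2]_n.

Section Defs.
Variable (R : realType).
Notation C := (R[i]).
Variable n : nat.

Definition dot (x y : F2n n) : 'F_2 := (x *m y^T) 0 0.

Definition avg (f : F2n n -> C) : C := (#|{: F2n n}|%:R)^-1 * \sum_x f x.

Definition norm2 (g : F2n n -> C) : C := sqrtC (avg (fun x => `|g x| ^+ 2)).

Definition Delta (a : F2n n) (g : F2n n -> C) : F2n n -> C :=
  fun x => g (x + a) * (g x)^*.

Definition fourier (g : F2n n -> C) (b : F2n n) : C :=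
  avg (fun x => g x * (-1) ^+ (nat_of_ord (dot b x))).

Definition U3norm (g : F2n n -> C) : C :=
  8.-root (avg (fun x => avg (fun a => avg (fun b => avg (fun c =>
    Delta a (Delta b (Delta c g)) x))))).

(* F_2^{2n} = F_2^n x F_2^n, standard symplectic form *)
Definition sympl (u v : F2n n * F2n n) : 'F_2 :=
  dot u.1 v.2 - dot u.2 v.1.

Definition isotropic (U : {vspace (F2n n * F2n n)}) : Prop :=
  forall u v, u \in U -> v \in U -> sympl u v = 0.

Definition lagrangian (L : {vspace (F2n n * F2n n)}) : Prop :=
  isotropic L /\ forall M : {vspace (F2n n * F2n n)}, isotropic M -> (L <= M)%VS -> M = L.

End Defs.

(* Main.v *)
Require Import Defs.
From HB Require Import structures.
From mathcomp Require Import all_boot all_order all_algebra.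
From mathcomp Require Import complex.
From mathcomp Require Import reals.
From mathcomp Require Import ring.
Set Implicit Arguments. Unset Strict Implicit. Unset Printing Implicit Defensive.
Import Order.TTheory GRing.Theory Num.Theory.
Local Open Scope ring_scope.

Lemma F2_cases (k : 'F_2) : k = 0 \/ k = 1.
Proof. by case: k => [[|[|]]] //= ?; [left|right]; apply/val_inj. Qed.

Lemma F2_addK (k : 'F_2) : k + k = 0.
Proof. by case: k => [[|[|]]] //= ?; apply/val_inj. Qed.

Lemma F2_opp (k : 'F_2) : - k = k.
Proof. by case: k => [[|[|]]] //= ?; apply/val_inj. Qed.

Lemma F2_neq0 (k : 'F_2) : k != 0 -> k = 1.
Proof. by case: (F2_cases k) => ->. Qed.

Section S.
Variable R : realType.
Notation C := (R[i]).

Definition sg (k : 'F_2) : C := (-1) ^+ (nat_of_ord k).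

Lemma sg0 : sg 0 = 1. Proof. by []. Qed.
Lemma sg1 : sg 1 = -1. Proof. by rewrite /sg /= expr1. Qed.

Lemma sgD k1 k2 : sg (k1 + k2) = sg k1 * sg k2.
Proof.
case: (F2_cases k1) => ->; case: (F2_cases k2) => ->;
  rewrite ?addr0 ?add0r ?sg0 ?sg1 ?mul1r ?mulr1 ?F2_addK ?sg0 //.
by rewrite mulrNN mulr1.
Qed.

Lemma sg_conj k : (sg k)^* = sg k.
Proof. by case: (F2_cases k) => ->; rewrite ?sg0 ?sg1 ?conjC1 ?conjCN1. Qed.

Lemma sg_sq k : sg k * sg k = 1.
Proof. by case: (F2_cases k) => ->; rewrite ?sg0 ?sg1 ?mulr1 ?mulrNN ?mulr1. Qed.

Lemma sg_norm k : `|sg k| = 1.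
Proof. by case: (F2_cases k) => ->; rewrite ?sg0 ?sg1 ?normrN normr1. Qed.

Lemma one_neq_m1 : (1:C) != -1.
Proof. by rewrite -subr_eq0 opprK -mulr2n mulrn_eq0 oner_eq0. Qed.

Lemma sg_inj k1 k2 : sg k1 = sg k2 -> k1 = k2.
Proof.
case: (F2_cases k1) => ->; case: (F2_cases k2) => -> //; rewrite sg0 sg1 => /eqP;
 by rewrite ?(eq_sym (-1)) (negbTE one_neq_m1).
Qed.

Lemma char_sum (G : finType) (add : G -> G -> G) (H : {set G}) (chi : G -> 'F_2) :
  (forall x y, chi (add x y) = chi x + chi y) ->
  (forall x y, add (add x y) y = x) ->
  (forall x y, x \in H -> y \in H -> add x y \in H) ->
  \sum_(h in H) sg (chi h) = if [forall h in H, chi h == 0] then #|H|%:R else 0.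
Proof.
move=> chiD addK Hadd.
case: ifP => [/forall_inP all0 | H0].
  rewrite -sum1_card natr_sum; apply: eq_bigr => h hH.
  by rewrite (eqP (all0 h hH)) sg0.
move/negbT: H0; rewrite negb_forall_in => /exists_inP [h0 h0H /F2_neq0 c1].
suff: (\sum_(h in H) sg (chi h)) *+ 2 = 0 by move/eqP; rewrite mulrn_eq0 /= => /eqP.
rewrite mulr2n.
rewrite {2}(reindex_inj (h := fun x => add x h0)); last first.
  by move=> x y /= E; rewrite -(addK x h0) E addK.
rewrite (eq_bigl (fun h => h \in H)); last first.
  move=> x /=; apply/idP/idP => [xH|xH]; last exact: Hadd.
  by rewrite -(addK x h0); apply: Hadd.
by rewrite -big_split /= big1 // => h _; rewrite chiD sgD c1 sg1 mulrN1 subrr.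
Qed.
Variable n : nat.
Notation V := (F2n n).

Lemma dotC (x y : V) : dot x y = dot y x.
Proof. rewrite /dot !mxE; apply: eq_bigr => j _; by rewrite !mxE mulrC. Qed.

Lemma dotDl (x y z : V) : dot (x + y) z = dot x z + dot y z.
Proof. by rewrite /dot mulmxDl mxE. Qed.

Lemma dotDr (x y z : V) : dot z (x + y) = dot z x + dot z y.
Proof. by rewrite dotC dotDl !(dotC z). Qed.

Lemma dot0l (x : V) : dot 0 x = 0.
Proof. by rewrite /dot mul0mx mxE. Qed.

Lemma dot0r (x : V) : dot x 0 = 0.
Proof. by rewrite dotC dot0l. Qed.

Lemma dot_delta (x : V) i : dot (delta_mx 0 i) x = x 0 i.
Proof.
rewrite /dot mxE (bigD1 i) //= big1 ?addr0; first by rewrite !mxE !eqxx mul1r.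
by move=> j ji; rewrite !mxE (negbTE ji) andbF mul0r.
Qed.

Lemma vopp (x : V) : - x = x.
Proof. by apply/matrixP => i j; rewrite !mxE F2_opp. Qed.

Lemma vaddK (x y : V) : x + y + y = x.
Proof. by rewrite -{2}(vopp y) addrK. Qed.

Lemma vaddxx (x : V) : x + x = 0.
Proof. by rewrite -{2}(vopp x) subrr. Qed.

Definition N : C := #|{: V}|%:R.

Lemma N_neq0 : N != 0.
Proof. by rewrite /N pnatr_eq0 -lt0n; apply/card_gt0P; by exists (0 : V). Qed.

Lemma char_orth (x : V) : \sum_b sg (dot b x) = if x == 0 then N else 0.
Proof.
have := @char_sum V (fun a b : V => a + b) setT (fun b => dot b x) (fun a b => dotDl a b x) vaddK
  (fun _ _ _ _ => in_setT _).
rewrite (eq_bigl xpredT) => [->|b]; last by rewrite in_setT.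
have [->|x0] := eqP.
  case: ifP => [_|/negbT/forall_inP[]]; first by rewrite cardsT.
  by move=> b _; rewrite dot0r.
case: ifP => // /forall_inP H; exfalso; apply: x0; apply/matrixP => i j.
rewrite (ord1 i) mxE -dot_delta; exact/eqP/H/in_setT.
Qed.

Lemma conjNV : (N^-1)^* = N^-1.
Proof. by rewrite fmorphV; congr (_^-1); exact: conjC_nat. Qed.

Lemma sum_shift (f : V -> C) a : \sum_x f (x + a) = \sum_x f x.
Proof. by rewrite [RHS](reindex_inj (addIr a)). Qed.

Lemma avg_shift (f : V -> C) a : avg (fun x => f (x + a)) = avg f.
Proof. by rewrite /avg sum_shift. Qed.

Lemma fourierE (g : V -> C) b : fourier g b = N^-1 * \sum_x g x * sg (dot b x).
Proof. by []. Qed.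

Lemma parseval (g : V -> C) :
  \sum_b `|fourier g b| ^+ 2 = avg (fun x => `|g x| ^+ 2).
Proof.
have E b : `|fourier g b| ^+ 2 = N^-1 * N^-1 *
    \sum_x \sum_y (g x * (g y)^* * sg (dot b (x + y))).
  rewrite normCK fourierE rmorphM rmorph_sum /= conjNV mulrACA mulr_suml.
  congr (_ * _); apply: eq_bigr => x _; rewrite mulr_sumr; apply: eq_bigr => y _.
  rewrite rmorphM /= sg_conj dotDr sgD. ring.
rewrite (eq_bigr _ (fun b _ => E b)) -mulr_sumr. rewrite exchange_big /=.
under eq_bigr do rewrite exchange_big /=.
have F x : \sum_y \sum_b (g x * (g y)^* * sg (dot b (x + y))) = `|g x| ^+ 2 * N.
  transitivity (\sum_y (if y == x then `|g x| ^+ 2 * N else 0)).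
    apply: eq_bigr => y _; rewrite -mulr_sumr char_orth addr_eq0 vopp (eq_sym x).
    by case: eqP => [->|]; rewrite ?normCK ?mulr0.
  by rewrite -big_mkcond big_pred1_eq.
rewrite (eq_bigr _ (fun x _ => F x)) -mulr_suml /avg.
rewrite -/N; field; exact: N_neq0.
Qed.

Lemma avgE (f : V -> C) : avg f = N^-1 * \sum_x f x.
Proof. by []. Qed.

Lemma normsq_fourier (g : V -> C) b : `|fourier g b| ^+ 2 = N^-1 * N^-1 *
    \sum_x \sum_y (g x * (g y)^* * sg (dot b (x + y))).
Proof.
rewrite normCK fourierE rmorphM rmorph_sum /= conjNV mulrACA mulr_suml.
congr (_ * _); apply: eq_bigr => x _; rewrite mulr_sumr; apply: eq_bigr => y _.
rewrite rmorphM /= sg_conj dotDr sgD; ring.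
Qed.

Definition Acor (g : V -> C) b := avg (fun x => g (x + b) * (g x)^*).

Lemma fourier_Acor (g : V -> C) xi : fourier (Acor g) xi = `|fourier g xi| ^+ 2.
Proof.
rewrite normsq_fourier fourierE /Acor.
under eq_bigr do rewrite avgE -mulrA mulr_suml.
rewrite -mulr_sumr mulrA exchange_big /=; congr (_ * _); rewrite [RHS]exchange_big /=.
apply: eq_bigr => x _.
rewrite -(sum_shift _ x); apply: eq_bigr => y _.
rewrite [x + (y + x)]addrC -addrA vaddxx addr0 (addrC y x); ring.
Qed.

Lemma U2 (g : V -> C) :
  avg (fun x => avg (fun b => avg (fun c => Delta b (Delta c g) x))) =
  \sum_xi `|fourier g xi| ^+ 4.
Proof.
have E xi : `|fourier g xi| ^+ 4 = `|fourier (Acor g) xi| ^+ 2.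
  by rewrite fourier_Acor normrX normr_id -exprM.
rewrite (eq_bigr _ (fun xi _ => E xi)) parseval.
transitivity (N^-1 * \sum_b N^-1 * \sum_x N^-1 *
   \sum_c (g (x + b) * g (x + c) * (g x)^* * (g (x + c + b))^*)).
  rewrite avgE.
  under eq_bigr do rewrite avgE mulr_sumr.
  rewrite exchange_big /=; congr (_ * _); apply: eq_bigr => b _.
  rewrite -mulr_sumr; congr (_ * _).
  rewrite -(sum_shift _ b); apply: eq_bigr => x _.
  rewrite avgE; congr (_ * _); apply: eq_bigr => c _.
  rewrite /Delta !(vaddK x b) rmorphM /= conjCK (addrAC x c b); ring.
rewrite avgE; congr (_ * _); apply: eq_bigr => b _.
rewrite normCK /Acor !avgE rmorphM rmorph_sum /= conjNV mulrACA mulr_suml.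
rewrite -mulrA; congr (_ * _); rewrite mulr_sumr; apply: eq_bigr => x _.
congr (_ * _); symmetry.
rewrite mulr_sumr -(sum_shift _ x); apply: eq_bigr => c _.
rewrite rmorphM /= conjCK (addrC c x); ring.
Qed.

Lemma Delta_comm a b (g : V -> C) x :
  Delta a (Delta b g) x = Delta b (Delta a g) x.
Proof. by rewrite /Delta !rmorphM /= !conjCK (addrAC x a b); ring. Qed.

Lemma Delta_ext a (f f' : V -> C) x : f =1 f' -> Delta a f x = Delta a f' x.
Proof. by move=> H; rewrite /Delta !H. Qed.

Lemma avg_swap (F : V -> V -> C) :
  avg (fun x => avg (fun a => F x a)) = avg (fun a => avg (fun x => F x a)).
Proof.
by rewrite /avg -!mulr_sumr exchange_big.
Qed.

Lemma avg_ext (f f' : V -> C) : f =1 f' -> avg f = avg f'.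
Proof. by move=> H; rewrite !avgE; under eq_bigr do rewrite H. Qed.

Definition Wf (phi : V -> C) a b := fourier (Delta a phi) b.

Lemma U3_fourier (phi : V -> C) :
  avg (fun x => avg (fun a => avg (fun b => avg (fun c =>
    Delta a (Delta b (Delta c phi)) x)))) =
  avg (fun a => \sum_xi `|Wf phi a xi| ^+ 4).
Proof.
rewrite avg_swap; apply: avg_ext => a; rewrite -U2.
apply: avg_ext => x; apply: avg_ext => b; apply: avg_ext => c.
rewrite Delta_comm; apply: Delta_ext => y; exact: Delta_comm.
Qed.

Definition Qn (phi : V -> C) := avg (fun x => `|phi x| ^+ 2).

Lemma sum_shiftl (f : V -> C) x : \sum_a f (x + a) = \sum_a f a.
Proof. by rewrite -(sum_shift _ x); apply: eq_bigr => a _; rewrite addrC. Qed.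

Lemma W2_sum (phi : V -> C) :
  avg (fun a => \sum_xi `|Wf phi a xi| ^+ 2) = Qn phi * Qn phi.
Proof.
rewrite (avg_ext (f' := fun a => avg (fun x => `|phi (x + a)| ^+ 2 * `|phi x| ^+ 2))); last first.
  by move=> a; rewrite parseval; apply: avg_ext => x; rewrite /Delta normrM exprMn norm_conjC.
rewrite -avg_swap.
transitivity (avg (fun x => `|phi x| ^+ 2 * Qn phi)); last first.
  by rewrite {1}avgE -mulr_suml mulrA.
apply: avg_ext => x; rewrite /Qn !avgE mulrCA; congr (_ * _); symmetry.
rewrite mulr_sumr -(sum_shiftl _ x); apply: eq_bigr => a _; by rewrite addrA vaddxx add0r mulrC.
Qed.

Lemma WfE (phi : V -> C) a b :
  Wf phi a b = N^-1 * \sum_x phi (x + a) * (phi x)^* * sg (dot b x).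
Proof. by []. Qed.

Lemma Qn_shift (phi : V -> C) a : N^-1 * \sum_x `|phi (x + a)| ^+ 2 = Qn phi.
Proof. by rewrite (sum_shift (fun y => `|phi y| ^+ 2)). Qed.

Lemma avg_ge0 (f : V -> C) : (forall x, 0 <= f x) -> 0 <= avg f.
Proof.
move=> H; rewrite avgE mulr_ge0 ?sumr_ge0 // invr_ge0 /N ler0n //.
Qed.

Lemma var_id (phi : V -> C) a b : Qn phi = 1 ->
  avg (fun x => `|phi (x + a) * sg (dot b x) - Wf phi a b * phi x| ^+ 2)
  = 1 - `|Wf phi a b| ^+ 2.
Proof.
move=> Q1; set W := Wf phi a b.
have e' (w : C) x : `|phi (x + a) * sg (dot b x) - w * phi x| ^+ 2 =
   `|phi (x + a)| ^+ 2 - w * (phi x * (phi (x + a))^* * sg (dot b x))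
   - w^* * (phi (x + a) * (phi x)^* * sg (dot b x)) + w * w^* * `|phi x| ^+ 2.
  rewrite !normCK rmorphB !rmorphM /= sg_conj.
  have := sg_sq (dot b x); move=> ss.
  transitivity (phi (x + a) * (phi (x + a))^* * (sg (dot b x) * sg (dot b x))
     - w * (phi x * (phi (x + a))^* * sg (dot b x))
     - w^* * (phi (x + a) * (phi x)^* * sg (dot b x)) + w * w^* * (phi x * (phi x)^*)).
    ring.
  by rewrite ss mulr1.
have e := e' W.
have S1 : \sum_x `|phi (x + a)| ^+ 2 = N.
  by apply: (mulfI (invr_neq0 N_neq0)); rewrite Qn_shift Q1 mulVf ?N_neq0.
have S4 : \sum_x `|phi x| ^+ 2 = N.
  by apply: (mulfI (invr_neq0 N_neq0)); rewrite mulVf ?N_neq0 //; exact: Q1.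
have S3 : \sum_x phi (x + a) * (phi x)^* * sg (dot b x) = N * W.
  by rewrite /W WfE mulrA divff ?N_neq0 ?mul1r.
have S2 : \sum_x phi x * (phi (x + a))^* * sg (dot b x) = N * W^*.
  rewrite /W WfE rmorphM rmorph_sum /= conjNV mulrA divff ?N_neq0 ?mul1r //.
  by apply: eq_bigr => x _; rewrite !rmorphM /= conjCK sg_conj; ring.
rewrite /avg -/N (eq_bigr _ (fun x _ => e x)) big_split /= !sumrB -!mulr_sumr.
rewrite S1 S2 S3 S4 normCK.
by field; exact: N_neq0.
Qed.

Lemma W_le1 (phi : V -> C) a b : Qn phi = 1 -> `|Wf phi a b| <= 1.
Proof.
move=> Q1; have := @avg_ge0 (fun x => `|phi (x + a) * sg (dot b x) - Wf phi a b * phi x| ^+ 2).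
rewrite var_id // subr_ge0 => H.
have := H (fun x => exprn_ge0 2 (normr_ge0 _)).
move=> h; rewrite real_leNgt ?normr_real ?real1 //; apply/negP => h1.
have h2 : 1 < `|Wf phi a b| ^+ 2 by rewrite exprn_egt1.
by have := lt_le_trans h2 h; rewrite ltxx.
Qed.

Lemma W_eigen (phi : V -> C) a b : Qn phi = 1 -> `|Wf phi a b| = 1 ->
  forall x, phi (x + a) * sg (dot b x) = Wf phi a b * phi x.
Proof.
move=> Q1 W1 x; have := var_id a b Q1; rewrite W1 expr1n subrr avgE => /eqP.
rewrite mulf_eq0 invr_eq0 (negbTE N_neq0) /= => /eqP H.
have := @psumr_eq0P _ _ _ _ (fun y _ => exprn_ge0 2 (normr_ge0
    (phi (y + a) * sg (dot b y) - Wf phi a b * phi y))) H x isT.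
by move/eqP; rewrite expf_eq0 /= normr_eq0 subr_eq0 => /eqP.
Qed.

Notation VV := (V * V)%type.

Lemma paddK (x y : VV) : x + y + y = x.
Proof. by apply: injective_projections => /=; apply: vaddK. Qed.

Lemma padd_xx (x : VV) : x + x = 0.
Proof. by apply: injective_projections => /=; apply: vaddxx. Qed.

Lemma symplDl (x y z : VV) : sympl (x + y) z = sympl x z + sympl y z.
Proof. rewrite /sympl /= !dotDl. ring. Qed.

Lemma symplDr (x y z : VV) : sympl z (x + y) = sympl z x + sympl z y.
Proof. rewrite /sympl /= !dotDr. ring. Qed.

Lemma vnz (m : V) : m != 0 -> exists i, m 0 i != 0.
Proof.
move=> m0; apply/existsP; apply: contraR m0; rewrite negb_exists => /forallP H.
by apply/eqP/matrixP => i j; rewrite (ord1 i) mxE; apply/eqP; rewrite -[_ == _]negbK H.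
Qed.

Lemma sympl_nondeg (m : VV) : m != 0 -> exists u, sympl m u != 0.
Proof.
case: m => m1 m2; have [->|m10] := eqVneq m1 0.
  have [->|m20] := eqVneq m2 0; first by rewrite eqxx.
  move=> _; have [i hi] := vnz m20.
  exists (delta_mx 0 i, 0); rewrite /sympl /= dot0l (dotC m2) dot_delta sub0r oppr_eq0; exact: hi.
move=> _; have [i hi] := vnz m10.
exists (0, delta_mx 0 i); rewrite /sympl /= dot0r subr0 dotC dot_delta; exact: hi.
Qed.

Lemma sum_sympl (m : VV) : \sum_u sg (sympl m u) = if m == 0 then #|{: VV}|%:R else 0.
Proof.
have := @char_sum VV (fun a b : VV => a + b) setT (fun u => sympl m u)
  (fun a b => symplDr a b m) paddK (fun _ _ _ _ => in_setT _).
rewrite (eq_bigl xpredT) => [->|b]; last by rewrite in_setT.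
rewrite cardsT; have [->|m0] := eqP.
  case: ifP => [//|/negbT/forall_inP[]] b _.
  by rewrite /sympl /= dot0l dot0l subrr.
case: ifP => // /forall_inP H; exfalso.
have [u hu] := sympl_nondeg (introN eqP m0).
by move: hu; rewrite (eqP (H u (in_setT u))) eqxx.
Qed.

Lemma isotropic_card (M : {vspace VV}) : isotropic M -> (#|[set u | u \in M]| <= #|V|)%N.
Proof.
move=> iso; set Ms := [set u | u \in M].
set Pp := [set u : VV | [forall m in Ms, sympl m u == 0]].
have MsD : forall x y, x \in Ms -> y \in Ms -> x + y \in Ms.
  by move=> x y; rewrite !inE => hx hy; rewrite memvD.
have E1 : \sum_u \sum_(m in Ms) sg (sympl m u) = (#|Ms| * #|Pp|)%:R.
  transitivity (\sum_u (if u \in Pp then #|Ms|%:R else 0 : C)).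
    apply: eq_bigr => u _.
    rewrite (@char_sum VV (fun a b : VV => a + b) Ms (fun m => sympl m u)
      (fun a b => symplDl a b u) paddK MsD).
    by rewrite inE.
  by rewrite -big_mkcond /= sumr_const natrM mulr_natr.
have E2 : \sum_u \sum_(m in Ms) sg (sympl m u) = (#|V| * #|V|)%:R.
  rewrite exchange_big /= (eq_bigr (fun m => if m == 0 then #|{: VV}|%:R else 0)); last first.
    by move=> m _; rewrite sum_sympl.
  rewrite (bigD1 (0 : VV)) /=; last by rewrite inE mem0v.
  rewrite eqxx big1 ?addr0; first by rewrite card_prod.
  by move=> m /andP[_ /negbTE ->].
have Ecard : (#|Ms| * #|Pp| = #|V| * #|V|)%N.
  by apply/eqP; rewrite -(eqr_nat C) -E1 -E2.
have MP : (#|Ms| <= #|Pp|)%N.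
  apply/subset_leq_card/subsetP => u; rewrite !inE => uM.
  apply/forall_inP => m; rewrite inE => mM; apply/eqP; exact: iso.
rewrite leqNgt; apply/negP => lt.
have : (#|V| * #|V| < #|Ms| * #|Pp|)%N.
  exact: (leq_trans (ltn_mul lt lt) (leq_mul (leqnn _) MP)).
by rewrite Ecard ltnn.
Qed.

Definition Tn (phi : V -> C) := avg (fun x => avg (fun a => avg (fun b => avg (fun c =>
    Delta a (Delta b (Delta c phi)) x)))).

Lemma e24 (x : C) : x ^+ 2 - x ^+ 4 = x ^+ 2 * (1 - x ^+ 2).
Proof. ring. Qed.

Lemma W01 (phi : V -> C) : Qn phi = 1 -> Tn phi = 1 ->
  forall a b, `|Wf phi a b| = 0 \/ `|Wf phi a b| = 1.
Proof.
move=> Q1 T1.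
have h1 := W2_sum phi; have h2 := U3_fourier phi.
rewrite -/(Tn phi) T1 Q1 mulr1 !avgE in h1 h2.
have ge0 a b : 0 <= `|Wf phi a b| ^+ 2 - `|Wf phi a b| ^+ 4.
  rewrite e24 mulr_ge0 ?exprn_ge0 // subr_ge0 exprn_ile1 ?exprn_ge0 //.
  exact: W_le1.
have S0 : \sum_a \sum_b (`|Wf phi a b| ^+ 2 - `|Wf phi a b| ^+ 4) = 0.
  under eq_bigr do rewrite sumrB.
  rewrite sumrB.
  have e1 : \sum_a \sum_b `|Wf phi a b| ^+ 2 = N.
    by apply: (mulfI (invr_neq0 N_neq0)); rewrite h1 mulVf ?N_neq0.
  have e2 : \sum_a \sum_b `|Wf phi a b| ^+ 4 = N.
    by apply: (mulfI (invr_neq0 N_neq0)); rewrite -h2 mulVf ?N_neq0.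
  by rewrite e1 e2 subrr.
move=> a b.
have Sa := @psumr_eq0P _ _ _ _ (fun a _ => sumr_ge0 _ (fun b _ => ge0 a b)) S0 a isT.
have := @psumr_eq0P _ _ _ _ (fun b _ => ge0 a b) Sa b isT.
rewrite e24; move/eqP; rewrite mulf_eq0 => /orP[|].
  by rewrite expf_eq0 /= normr_eq0 => /eqP ->; left; rewrite normr0.
rewrite subr_eq0 eq_sym sqrp_eq1 ?normr_ge0 // => /eqP; by right.
Qed.

Definition Sset (phi : V -> C) := [set u : VV | `|Wf phi u.1 u.2| == 1].

Lemma cardS (phi : V -> C) : Qn phi = 1 -> Tn phi = 1 -> #|Sset phi| = #|V|.
Proof.
move=> Q1 T1; have h2 := U3_fourier phi.
rewrite -/(Tn phi) T1 avgE in h2.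
have e a b : `|Wf phi a b| ^+ 4 = if (a, b) \in Sset phi then 1 else 0.
  rewrite inE /=; case: (W01 Q1 T1 a b) => ->; rewrite ?eqxx ?expr1n //.
  by rewrite eq_sym oner_eq0 expr0n.
have E1 : \sum_a \sum_b `|Wf phi a b| ^+ 4 = N.
  by apply: (mulfI (invr_neq0 N_neq0)); rewrite -h2 mulVf ?N_neq0.
have E2 : \sum_a \sum_b `|Wf phi a b| ^+ 4 = #|Sset phi|%:R.
  under eq_bigr do under eq_bigr do rewrite e.
  rewrite pair_bigA /=; under eq_bigr do rewrite -surjective_pairing.
  by rewrite -big_mkcond /= sumr_const.
by move: E1; rewrite E2 /N => /eqP; rewrite eqr_nat => /eqP.
Qed.

Lemma W_of_eigen (phi : V -> C) a b c : Qn phi = 1 ->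
  (forall x, phi (x + a) * sg (dot b x) = c * phi x) -> Wf phi a b = c.
Proof.
move=> Q1 H; rewrite WfE.
transitivity (c * Qn phi); last by rewrite Q1 mulr1.
rewrite /Qn avgE mulrCA; congr (_ * _); rewrite mulr_sumr; apply: eq_bigr => x _.
rewrite -mulrA (mulrC (_^*)) mulrA H normCK; ring.
Qed.

Lemma eigen_add (phi : V -> C) a b a' b' c c' :
  (forall x, phi (x + a) * sg (dot b x) = c * phi x) ->
  (forall x, phi (x + a') * sg (dot b' x) = c' * phi x) ->
  forall x, phi (x + (a + a')) * sg (dot (b + b') x) = sg (dot b a') * c * c' * phi x.
Proof.
move=> H H' x.
have h := H (x + a'); rewrite dotDr sgD addrAC -addrA in h.
have -> : phi (x + (a + a')) * sg (dot (b + b') x) =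
  sg (dot b a') * (phi (x + (a + a')) * (sg (dot b x) * sg (dot b a'))) * sg (dot b' x).
  rewrite dotDl sgD; have := sg_sq (dot b a'); move=> ss.
  transitivity (phi (x + (a + a')) * (sg (dot b x) * sg (dot b' x)) * (sg (dot b a') * sg (dot b a'))).
    by rewrite ss mulr1.
  ring.
rewrite h; transitivity (sg (dot b a') * c * (phi (x + a') * sg (dot b' x))); first ring.
by rewrite H'; ring.
Qed.

Lemma S_eig (phi : V -> C) u : Qn phi = 1 -> u \in Sset phi ->
  forall x, phi (x + u.1) * sg (dot u.2 x) = Wf phi u.1 u.2 * phi x.
Proof. by move=> Q1; rewrite inE => /eqP; exact: W_eigen. Qed.

Lemma S_add (phi : V -> C) u v : Qn phi = 1 -> u \in Sset phi -> v \in Sset phi ->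
  u + v \in Sset phi.
Proof.
move=> Q1 hu hv; have e := eigen_add (S_eig Q1 hu) (S_eig Q1 hv).
rewrite inE /= (W_of_eigen Q1 e) (normrM _ (Wf phi v.1 v.2)) (normrM (sg _)) sg_norm.
move: hu hv; rewrite !inE => /eqP -> /eqP ->; by rewrite !mulr1.
Qed.

Lemma exists_nz (phi : V -> C) : Qn phi = 1 -> exists x, phi x != 0.
Proof.
move=> Q1; apply/existsP; apply: contraLR isT => /existsPn H.
have : Qn phi = 0.
  by rewrite /Qn avgE big1 ?mulr0 // => x _; rewrite (eqP (negbNE (H x))) normr0 expr0n.
by rewrite Q1 => /eqP; rewrite oner_eq0.
Qed.

Lemma S_iso (phi : V -> C) u v : Qn phi = 1 -> u \in Sset phi -> v \in Sset phi ->
  sympl u v = 0.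
Proof.
move=> Q1 hu hv; have [x hx] := exists_nz Q1.
have e1 := eigen_add (S_eig Q1 hu) (S_eig Q1 hv) x.
have e2 := eigen_add (S_eig Q1 hv) (S_eig Q1 hu) x.
rewrite (addrC v.1) (addrC v.2) e1 in e2.
have nzW w : w \in Sset phi -> Wf phi w.1 w.2 != 0.
  by rewrite inE -normr_eq0 => /eqP ->; rewrite oner_eq0.
have : sg (dot u.2 v.1) = sg (dot v.2 u.1).
  apply: (mulIf hx); apply: (mulIf (nzW _ hv)); apply: (mulIf (nzW _ hu)).
  move: e2; move: (Wf phi u.1 u.2) (Wf phi v.1 v.2) => p q e2.
  transitivity (sg (dot u.2 v.1) * p * q * phi x); first ring.
  by rewrite e2; ring.
move/sg_inj; rewrite /sympl => ->; by rewrite dotC subrr.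
Qed.

Lemma span_sub (S : {set VV}) : 0 \in S ->
  (forall u v, u \in S -> v \in S -> u + v \in S) ->
  forall X : seq VV, all (fun x => x \in S) X -> forall u, u \in <<X>>%VS -> u \in S.
Proof.
move=> S0 SD; elim=> [|x X IH] /=.
  by move=> _ u; rewrite span_nil memv0 => /eqP ->.
move=> /andP[xS XS] u; rewrite span_cons => /memv_addP[y /vlineP[k ->] [z zX ->]].
apply: SD; last exact: IH.
by case: (F2_cases k) => ->; rewrite ?scale0r ?scale1r.
Qed.

Lemma main_fwd (phi : V -> C) : norm2 phi = 1 -> U3norm phi = 1 ->
  exists L : {vspace VV}, lagrangian L /\
    forall a b, `|fourier (Delta a phi) b| = (if (a, b) \in L then 1 else 0).
Proof.
move=> h2 h3.
have Q1 : Qn phi = 1.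
  by rewrite -[Qn phi]sqrtCK; change (sqrtC (Qn phi)) with (norm2 phi); rewrite h2 expr1n.
have T1 : Tn phi = 1.
  by have := congr1 (fun z => z ^+ 8) h3; rewrite /U3norm /= rootCK // expr1n.
set S := Sset phi.
have S0 : 0 \in S.
  have : (0 < #|S|)%N by rewrite cardS // -cardsT card_gt0; apply/set0Pn; exists 0; rewrite inE.
  by case/card_gt0P => u uS; rewrite -(padd_xx u) S_add.
set L := <<enum S>>%VS.
have memL u : (u \in L) = (u \in S).
  apply/idP/idP => [|uS]; last by apply: memv_span; rewrite mem_enum.
  apply: (span_sub S0) => [v w|]; first exact: S_add.
  by apply/allP => x; rewrite mem_enum.
exists L; split; last first.
  move=> a b; rewrite memL inE /= -/(Wf phi a b).
  by case: (W01 Q1 T1 a b) => ->; rewrite ?eqxx // eq_sym oner_eq0.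
split; first by move=> u v; rewrite !memL; exact: S_iso.
move=> M isoM LM; apply/eqP; rewrite eqEsubv LM andbT; apply/subvP => u uM.
set Ms := [set u | u \in M].
have SMs : S \subset Ms.
  by apply/subsetP => v; rewrite -memL inE; apply: (subvP LM).
have cS : #|S| = #|Ms|.
  apply/eqP; rewrite eqn_leq subset_leq_card // cardS //; exact: isotropic_card.
have := (subset_cardP cS SMs) => Sm.
by rewrite memL Sm inE.
Qed.

Lemma sum_ind (L : {vspace VV}) :
  \sum_a \sum_b (if (a, b) \in L then 1 else 0 : C) = #|[set u | u \in L]|%:R.
Proof.
rewrite pair_bigA /=; under eq_bigr do rewrite -surjective_pairing.
rewrite -big_mkcond /= -sumr_const; apply: eq_bigl => u; by rewrite inE.
Qed.

Lemma main_bwd (phi : V -> C) (L : {vspace VV}) :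
  (forall a b, `|fourier (Delta a phi) b| = (if (a, b) \in L then 1 else 0)) ->
  norm2 phi = 1 /\ U3norm phi = 1.
Proof.
move=> H.
have Wk k a b : `|Wf phi a b| ^+ k.+1 = if (a, b) \in L then 1 else 0.
  by rewrite /Wf H; case: ifP; rewrite ?expr1n ?expr0n.
have Q1 : Qn phi = 1.
  have W00 : Wf phi 0 0 = Qn phi.
    rewrite WfE /Qn avgE; congr (_ * _); apply: eq_bigr => x _.
    by rewrite addr0 dot0l sg0 mulr1 normCK.
  have := H 0 0; rewrite -/(Wf phi 0 0) W00 (_ : (0, 0) \in L) ?mem0v //.
  rewrite ger0_norm //; apply: avg_ge0 => x; exact: exprn_ge0.
have cL : #|[set u | u \in L]|%:R = N.
  have := W2_sum phi; rewrite Q1 mulr1 avgE.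
  under eq_bigr do under eq_bigr do rewrite (Wk 1%N).
  rewrite sum_ind => h; apply: (mulfI (invr_neq0 N_neq0)); by rewrite h mulVf ?N_neq0.
have T1 : Tn phi = 1.
  rewrite /Tn U3_fourier avgE.
  under eq_bigr do under eq_bigr do rewrite (Wk 3%N).
  by rewrite sum_ind cL mulVf ?N_neq0.
split; first by rewrite /norm2 -/(Qn phi) Q1 sqrtC1.
by rewrite /U3norm -/(Tn phi) T1 rootC1.
Qed.
End S.

Theorem proposition2p4 (R : realType) (n : nat) (phi : 'rV['F_2]_n -> R[i]) :
  (norm2 phi = 1 /\ U3norm phi = 1) <->
  exists L : {vspace ('rV['F_2]_n * 'rV['F_2]_n)}, lagrangian L /\
    forall a b : 'rV['F_2]_n,
      `|fourier (Delta a phi) b| = (if (a, b) \in L then 1 else 0).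
Proof.
split; first by case; exact: main_fwd.
by case=> L [_ H]; exact: main_bwd H.
Qed.
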